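(* Let $k\ge1$ and $n\ge k$ be integers, $m\ge2$ an even integer, and $\mathbf{a}=(a_1,\dots,a_k)\in\mathbb{R}^k$. Then for all $x$, \[ m^{k-n}\left(-\frac12\right)^{k}\frac{n!}{(n-k)!}\Big(\prod_{i=1}^{k}a_i\Big)E_{n-k}^{(k)}(mx\mid\mathbf{a})=\sum_{l_1,\dots,l_k=0}^{m-1}(-1)^{l_1+\dots+l_k}B_n^{(k)}\Big(x+\frac1m\sum_{i=1}^{k}a_il_i\,\Big|\,\mathbf{a}\Big). \]
   Context: The Nörlund polynomials are defined by $\sum_{n\ge0}B_n^{(k)}(x\mid\mathbf{a})\frac{t^n}{n!}=e^{xt}\prod_{j=1}^{k}\frac{a_jt}{e^{a_jt}-1}$, and the higher-order Euler polynomials with parameters by $\sum_{n\ge0}E_n^{(k)}(x\mid\mathbf{a})\frac{t^n}{n!}=e^{xt}\prod_{j=1}^{k}\frac{2}{e^{a_jt}+1}$ (the paper writes $E^{(k)}_{n-k}(mx)$, meaning these polynomials with the same parameter vector $\mathbf{a}$). *)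

(* Defs.v *)
(* Exponential generating functions are handled formally:
   a (formal) power series  sum_n f n * t^n / n!  is represented by its
   coefficient sequence  f : nat -> R. *)
From HB Require Import structures.
From mathcomp Require Import all_boot all_order all_algebra.
Set Implicit Arguments. Unset Strict Implicit. Unset Printing Implicit Defensive.
Import Order.TTheory GRing.Theory Num.Theory.
Local Open Scope ring_scope.

Section EGF.
Variable R : fieldType.

Definition egf_one : nat -> R := fun n => if n == 0%N then 1 else 0.

(* e^{c t} = sum c^n t^n/n! *)
Definition egf_exp (c : R) : nat -> R := fun n => c ^+ n.

Definition egf_mul (f g : nat -> R) : nat -> R :=
  fun n => \sum_(j < n.+1) ('C(n, j))%:R * f j * g (n - j)%N.

(* substitution t |-> c t *)
Definition egf_scale (c : R) (f : nat -> R) : nat -> R := fun n => c ^+ n * f n.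

(* multiplicative inverse of an EGF (assuming f 0 <> 0), computed by the
   recursion coming from  egf_mul f (egf_inv f) = egf_one *)
Fixpoint egf_inv_seq (f : nat -> R) (n : nat) : seq R :=
  match n with
  | 0%N => [:: (f 0%N)^-1]
  | n'.+1 =>
      let s := egf_inv_seq f n' in
      rcons s (- (f 0%N)^-1 *
               \sum_(j < n'.+1) ('C(n'.+1, j))%:R * f (n'.+1 - j)%N * nth 0 s j)
  end.

Definition egf_inv (f : nat -> R) : nat -> R := fun n => nth 0 (egf_inv_seq f n) n.

(* (e^t - 1)/t = sum_n t^n/(n+1)! = sum_n (1/(n+1)) t^n/n! *)
Definition expm1_over_t : nat -> R := fun n => (n.+1)%:R^-1.

(* (e^t + 1)/2 = 1 + sum_{n>=1} (1/2) t^n/n! *)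
Definition exp_plus1_half : nat -> R := fun n => if n == 0%N then 1 else 2^-1.

(* a t/(e^{a t} - 1) *)
Definition bern_factor (a : R) : nat -> R := egf_scale a (egf_inv expm1_over_t).

(* 2/(e^{a t} + 1) *)
Definition euler_factor (a : R) : nat -> R := egf_scale a (egf_inv exp_plus1_half).

(* Nörlund polynomial B_n^{(k)}(x | a):
   sum_n B_n^{(k)}(x|a) t^n/n! = e^{xt} prod_{j=1}^k a_j t/(e^{a_j t} - 1) *)
Definition norlund (k : nat) (a : 'I_k -> R) (n : nat) (x : R) : R :=
  egf_mul (egf_exp x) (\big[egf_mul/egf_one]_(j < k) bern_factor (a j)) n.

(* higher-order Euler polynomial E_n^{(k)}(x | a):
   sum_n E_n^{(k)}(x|a) t^n/n! = e^{xt} prod_{j=1}^k 2/(e^{a_j t} + 1) *)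
Definition euler_hk (k : nat) (a : 'I_k -> R) (n : nat) (x : R) : R :=
  egf_mul (egf_exp x) (\big[egf_mul/egf_one]_(j < k) euler_factor (a j)) n.

End EGF.

(* Main.v *)
Require Import Defs.
From HB Require Import structures.
From mathcomp Require Import all_boot all_order all_algebra.
From mathcomp Require Import ring.
From Stdlib Require Import FunctionalExtensionality.
Set Implicit Arguments. Unset Strict Implicit. Unset Printing Implicit Defensive.
Import Order.TTheory GRing.Theory Num.Theory.
Local Open Scope ring_scope.

Section Seq.
Variable R : realFieldType.
Implicit Types (f g : nat -> R) (c y z : R).

Lemma scale_mul c f g : egf_scale c (egf_mul f g) = egf_mul (egf_scale c f) (egf_scale c g).
Proof.
apply: functional_extensionality => n; rewrite /egf_scale /egf_mul mulr_sumr.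
apply: eq_bigr => j _; have hj : (j <= n)%N by rewrite -ltnS.
rewrite -{1}(subnKC hj) exprD; ring.
Qed.

Lemma scale_one c : egf_scale c (egf_one R) = egf_one R.
Proof.
apply: functional_extensionality => n; rewrite /egf_scale /egf_one.
by case: n => [|n] /=; rewrite ?expr0 ?mulr1 ?mulr0.
Qed.

Lemma scale_big c k (F : 'I_k -> nat -> R) :
  egf_scale c (\big[@egf_mul R/egf_one R]_(j < k) F j) = \big[@egf_mul R/egf_one R]_(j < k) egf_scale c (F j).
Proof.
elim: k F => [|k IH] F; first by rewrite !big_ord0 scale_one.
by rewrite !big_ord_recl /= scale_mul IH.
Qed.

Lemma scale_exp c y : egf_scale c (egf_exp y) = egf_exp (c * y).
Proof. by apply: functional_extensionality => n; rewrite /egf_scale /egf_exp exprMn. Qed.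

Lemma scale_scale c y f : egf_scale c (egf_scale y f) = egf_scale (c * y) f.
Proof. by apply: functional_extensionality => n; rewrite /egf_scale exprMn mulrA. Qed.

Lemma inv_seq_size f n : size (egf_inv_seq f n) = n.+1.
Proof. by elim: n => [|n IH] //=; rewrite size_rcons IH. Qed.

Lemma inv_seq_nth f n j : (j <= n)%N -> nth 0 (egf_inv_seq f n) j = egf_inv f j.
Proof.
elim: n j => [|n IH] j hj; first by case: j hj.
rewrite leq_eqVlt in hj; case/orP: hj => [/eqP ->|hj]; first by [].
by rewrite /= nth_rcons inv_seq_size hj IH.
Qed.

Lemma inv_spec f : f 0%N != 0 -> egf_mul (egf_inv f) f = egf_one R.
Proof.
move=> hf; apply: functional_extensionality => n; rewrite /egf_mul /egf_one.
case: n => [|n].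
  by rewrite big_ord1 /= bin0 mul1r /egf_inv /= mulVf.
rewrite big_ord_recr /= binn mul1r subnn.
have -> : egf_inv f n.+1 = - (f 0%N)^-1 *
   \sum_(j < n.+1) ('C(n.+1, j))%:R * f (n.+1 - j)%N * egf_inv f j.
  rewrite {1}/egf_inv /= nth_rcons inv_seq_size ltnn eqxx; congr (_ * _).
  by apply: eq_bigr => j _; rewrite inv_seq_nth // -ltnS.
rewrite mulrAC mulNr mulVf // mulN1r.
under eq_bigr => j _ do rewrite mulrAC.
by rewrite subrr.
Qed.

End Seq.
Section Poly.
Variable R : realFieldType.
Variable N : nat.
Implicit Types (f g : nat -> R) (c y z : R) (p q : {poly R}).

Lemma exp_add y z : egf_exp (y + z) = egf_mul (egf_exp y) (egf_exp z).
Proof.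
apply: functional_extensionality => n; rewrite /egf_exp /egf_mul addrC exprDn.
by apply: eq_bigr => j _; rewrite -mulr_natl; ring.
Qed.

Definition T f : {poly R} := \poly_(i < N.+1) (f i / (i`!)%:R).
Definition W p : {poly R} := p %% 'X^(N.+1).

Lemma fact_neq0 i : (i`!)%:R != 0 :> R.
Proof. by rewrite pnatr_eq0 -lt0n fact_gt0. Qed.

Lemma W_T f : W (T f) = T f.
Proof. by rewrite /W modp_small // size_polyXn ltnS size_poly. Qed.

Lemma WMl p q : W (W p * q) = W (p * q).
Proof. by rewrite /W mulrC modp_mul mulrC. Qed.
Lemma WMr p q : W (p * W q) = W (p * q).
Proof. by rewrite /W modp_mul. Qed.
Lemma WD p q : W (p + q) = W p + W q.
Proof. by rewrite /W modpD. Qed.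
Lemma WZ c p : W (c *: p) = c *: W p.
Proof. by rewrite /W modpZl. Qed.
Lemma WN p : W (- p) = - W p.
Proof. by rewrite -scaleN1r WZ scaleN1r. Qed.
Lemma WW p : W (W p) = W p.
Proof. by rewrite /W modp_id. Qed.
Lemma W1 : W 1 = 1.
Proof. by rewrite /W modp_small // size_polyXn size_poly1. Qed.
Lemma Wsum (I : Type) (r : seq I) (F : I -> {poly R}) : W (\sum_(i <- r) F i) = \sum_(i <- r) W (F i).
Proof.
elim: r => [|i r IH]; first by rewrite !big_nil /W mod0p.
by rewrite !big_cons WD IH.
Qed.

Lemma coefW p i : (W p)`_i = if (i < N.+1)%N then p`_i else 0.
Proof. by rewrite /W -Pdiv.IdomainMonic.take_poly_modp coef_take_poly. Qed.

Lemma T_mul f g : T (egf_mul f g) = W (T f * T g).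
Proof.
apply/polyP => i; rewrite coefW coef_poly coefM.
case: ltnP => hi //; rewrite /egf_mul mulr_suml; apply: eq_bigr => j _.
have hj : (j <= i)%N by rewrite -ltnS.
rewrite !coef_poly (leq_ltn_trans hj hi) (leq_ltn_trans (leq_subr j i) hi).
have := bin_fact hj => /(congr1 (fun n => n%:R : R)); rewrite !natrM => <-.
have h1 := fact_neq0 j; have h2 := fact_neq0 (i - j).
have h3 : ('C(i, j))%:R != 0 :> R by rewrite pnatr_eq0 -lt0n bin_gt0.
by field; rewrite h1 h2 h3.
Qed.

Lemma T_one : T (egf_one R) = 1.
Proof.
apply/polyP => i; rewrite coef_poly coef1 /egf_one.
by case: i => [|i] //=; rewrite ?mul1r ?invr1 ?mul0r //; case: ifP.
Qed.

Lemma T_big k (F : 'I_k -> nat -> R) :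
  T (\big[@egf_mul R/egf_one R]_(j < k) F j) = W (\prod_(j < k) T (F j)).
Proof.
elim: k F => [|k IH] F; first by rewrite big_ord0 big_ord0 T_one W1.
by rewrite big_ord_recl big_ord_recl T_mul IH WMr.
Qed.

Lemma T_sum (I : Type) (r : seq I) (cf : I -> R) (F : I -> nat -> R) :
  T (fun n => \sum_(i <- r) cf i * F i n) = \sum_(i <- r) cf i *: T (F i).
Proof.
apply/polyP => j; rewrite coef_poly coef_sum.
case: ltnP => hj.
  rewrite mulr_suml; apply: eq_bigr => i _; rewrite coefZ coef_poly hj mulrA //.
by rewrite big1 // => i _; rewrite coefZ coef_poly ltnNge hj /= mulr0.
Qed.

Lemma W_prod_congr k (P Q : 'I_k -> {poly R}) :
  (forall j, W (P j) = W (Q j)) -> W (\prod_j P j) = W (\prod_j Q j).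
Proof.
elim: k P Q => [|k IH] P Q h; first by rewrite !big_ord0.
rewrite !big_ord_recl -WMl h WMl -WMr (IH _ (fun j => Q (lift ord0 j))) ?WMr //.
Qed.

Definition Ex c := T (egf_exp c).

Lemma Ex_add y z : W (Ex (y + z)) = W (Ex y * Ex z).
Proof. by rewrite /Ex exp_add T_mul WW. Qed.

Lemma Ex_nat (l : nat) c : W (Ex (l%:R * c)) = W (Ex c ^+ l).
Proof.
elim: l => [|l IH].
  rewrite mul0r expr0 W1 W_T; apply/polyP => i; rewrite coef_poly coef1 /egf_exp.
  by case: i => [|i] //=; rewrite ?expr0 ?mul1r ?invr1 // expr0n mul0r; case: ifP.
by rewrite mulrSr mulrDl mul1r Ex_add exprSr -WMl IH WMl.
Qed.

Lemma Ex_sum k (y : 'I_k -> R) : W (Ex (\sum_j y j)) = W (\prod_j Ex (y j)).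
Proof.
elim: k y => [|k IH] y.
  rewrite !big_ord0 W1 W_T; apply/polyP => i; rewrite coef_poly coef1 /egf_exp.
  by case: i => [|i] //=; rewrite ?expr0 ?mul1r ?invr1 // expr0n mul0r; case: ifP.
by rewrite !big_ord_recl Ex_add -WMr IH WMr.
Qed.

End Poly.
Section Factor.
Variable R : realFieldType.
Variable N : nat.
Implicit Types (f g : nat -> R) (a c y z : R) (p q : {poly R}).
Local Notation T := (T N).
Local Notation W := (W N).
Local Notation Ex := (Ex N).

Definition Bp a := T (bern_factor a).
Definition Dp a := T (egf_scale a (@expm1_over_t R)).
Definition Fp c := T (egf_scale c (@exp_plus1_half R)).
Definition Gp c := T (euler_factor c).

Lemma WmulL p p' r : W p = W p' -> W (p * r) = W (p' * r).
Proof. by move=> h; rewrite -WMl h WMl. Qed.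

Lemma DB a : W (Dp a * Bp a) = 1.
Proof.
rewrite mulrC -T_mul /bern_factor -scale_mul inv_spec ?scale_one ?T_one //.
by rewrite /expm1_over_t invr1 oner_neq0.
Qed.

Lemma FG c : W (Fp c * Gp c) = 1.
Proof.
rewrite mulrC -T_mul /euler_factor -scale_mul inv_spec ?scale_one ?T_one //.
by rewrite /exp_plus1_half /= oner_neq0.
Qed.

Lemma XD a : W ('X * (a%:P * Dp a)) = Ex a - 1.
Proof.
apply/polyP => i; rewrite coefW coefXM coefB coef1 /Ex coef_poly /egf_exp.
case: i => [|i] /=; first by rewrite expr0 fact0 invr1 mulr1 subrr.
case: ltnP => hi; last by rewrite subr0.
rewrite coefCM coef_poly (ltn_trans (ltnSn i) hi) /egf_scale /expm1_over_t subr0.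
rewrite factS natrM exprS.
have h1 := fact_neq0 R i; have h2 : (i.+1)%:R != 0 :> R by rewrite pnatr_eq0.
by field; rewrite h1 nat1r h2.
Qed.

Lemma F2 c : Fp c = (2^-1)%:P * (1 + Ex c).
Proof.
apply/polyP => i; rewrite coefCM coefD coef1 /Ex /Fp !coef_poly /egf_exp /egf_scale /exp_plus1_half.
have h2 : (2:R) != 0 by rewrite pnatr_eq0.
case: i => [|i] /=; first by rewrite expr0 fact0 mul1r; field.
have hf := fact_neq0 R i.+1. by case: ifP => _; [field; rewrite ?hf ?h2 | rewrite add0r mulr0].
Qed.

Lemma sign_scale l p : (-1) ^+ l *: p = (-1) ^+ l * p.
Proof. by rewrite -mul_polyC rmorphXn rmorphN1. Qed.

Lemma geom m p : (\sum_(l < m) (-1) ^+ l * p ^+ l) * (1 + p) = 1 - (-1) ^+ m * p ^+ m.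
Proof.
elim: m => [|m IH]; first by rewrite big_ord0 mul0r !expr0 mul1r subrr.
by rewrite big_ord_recr /= mulrDl IH !exprS; ring.
Qed.

Lemma factor m a c : ~~ odd m -> m%:R * c = a ->
  W (\sum_(l < m) (-1) ^+ l *: (Ex c ^+ l * Bp a)) = W ((- 2^-1 * a) *: ('X * Gp c)).
Proof.
move=> hm hc.
set q := Ex c; set S := \sum_(l < m) (-1) ^+ l * q ^+ l.
have -> : \sum_(l < m) (-1) ^+ l *: (q ^+ l * Bp a) = S * Bp a.
  by rewrite /S mulr_suml; apply: eq_bigr => l _; rewrite sign_scale mulrA.
have hS : S * (1 + q) = 1 - q ^+ m by rewrite geom -signr_odd (negbTE hm) expr0 mul1r.
have hqm : W (q ^+ m) = Ex a by rewrite /q -Ex_nat hc /Ex W_T.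
have h1m : W (1 - q ^+ m) = W (- (a%:P * 'X * Dp a)).
  by rewrite WD WN W1 hqm WN -mulrA mulrCA XD opprB.
transitivity (W (S * Bp a * (Fp c * Gp c))); first by rewrite -(WMr N (S * Bp a) (Fp c * Gp c)) FG mulr1.
rewrite F2 -/q.
have -> : S * Bp a * ((2^-1)%:P * (1 + q) * Gp c) = (S * (1 + q)) * ((2^-1)%:P * Bp a * Gp c) by ring.
rewrite hS (WmulL _ h1m).
have -> : - (a%:P * 'X * Dp a) * ((2^-1)%:P * Bp a * Gp c) = ((- 2^-1 * a)%:P * ('X * Gp c)) * (Dp a * Bp a).
  by rewrite polyCM polyCN; ring.
by rewrite -WMr DB mulr1 mul_polyC.
Qed.

End Factor.

Theorem mainTheorem12 (R : realFieldType) (k n m : nat)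
  (hk : (1 <= k)%N) (hnk : (k <= n)%N) (hm : (2 <= m)%N) (hmeven : ~~ odd m)
  (a : 'I_k -> R) (x : R) :
  (m%:R ^+ (n - k))^-1 * (- 2^-1) ^+ k * ((n`!)%:R / ((n - k)`!)%:R)
    * (\prod_(i < k) a i) * euler_hk a (n - k) (m%:R * x)
  = \sum_(l : {ffun 'I_k -> 'I_m})
      (-1) ^+ (\sum_(i < k) (l i : nat))%N
      * norlund a n (x + m%:R^-1 * \sum_(i < k) a i * (l i : nat)%:R).
Proof.
have hm0 : m%:R != 0 :> R by rewrite pnatr_eq0 -lt0n (ltn_trans _ hm).
pose c j := m%:R^-1 * a j.
pose y (l : {ffun 'I_k -> 'I_m}) := x + m%:R^-1 * \sum_(i < k) a i * (l i : nat)%:R.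
pose P := \big[@egf_mul R/egf_one R]_(j < k) bern_factor (a j).
pose Q := egf_mul (egf_exp x) (\big[@egf_mul R/egf_one R]_(j < k) euler_factor (c j)).
pose Sq := fun i => \sum_(l : {ffun 'I_k -> 'I_m}) (-1) ^+ (\sum_(i < k) (l i : nat))%N
      * egf_mul (egf_exp (y l)) P i.
pose C := (- 2^-1) ^+ k * \prod_(i < k) a i : R.
have hy l : W n (Ex n (y l)) = W n (Ex n x * \prod_j Ex n (c j) ^+ l j).
  rewrite /y Ex_add -WMr.
  have -> : m%:R^-1 * \sum_(i < k) a i * (l i : nat)%:R = \sum_(i < k) (l i : nat)%:R * c i.
    by rewrite mulr_sumr; apply: eq_bigr => i _; rewrite /c; ring.
  rewrite Ex_sum (W_prod_congr (Q := fun j => Ex n (c j) ^+ l j)) ?WMr // => j.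
  exact: Ex_nat.
have hT : T n Sq = C *: W n ('X^k * T n Q).
  rewrite /Sq T_sum.
  under eq_bigr => l _ do rewrite T_mul T_big WMr -WMl hy WMl -mulrA -big_split /= -WZ.
  rewrite -Wsum.
  under eq_bigr => l _ do rewrite -prodrXr scalerAr -scaler_prod.
  rewrite -mulr_sumr -(bigA_distr_bigA (fun (i : 'I_k) (j : 'I_m) => (-1) ^+ j *: (Ex n (c i) ^+ j * Bp n (a i)))).
  rewrite -WMr (W_prod_congr (Q := fun i => (- 2^-1 * a i) *: ('X * Gp n (c i)))); last first.
    by move=> j; apply: factor => //; rewrite /c mulrA mulfV ?mul1r.
  rewrite WMr scaler_prod big_split /= prodr_const card_ord /C.
  rewrite big_split /= prodr_const card_ord.
  rewrite /Q T_mul T_big !WMr [in RHS]mulrA WMr -WZ; congr (W n _).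
  by rewrite -scalerAr mulrCA mulrA.
have hQ : Q = egf_scale m%:R^-1 (egf_mul (egf_exp (m%:R * x)) (\big[@egf_mul R/egf_one R]_(j < k) euler_factor (a j))).
  rewrite scale_mul scale_exp scale_big mulrA mulVf // mul1r /Q; congr (egf_mul _ _).
  by apply: eq_bigr => j _; rewrite /euler_factor scale_scale.
have e1 : (T n Sq)`_n = Sq n / (n`!)%:R by rewrite coef_poly ltnSn.
have e2 : (C *: W n ('X^k * T n Q))`_n = C * (Q (n - k)%N / ((n - k)`!)%:R).
  by rewrite coefZ coefW ltnSn coefXnM ltnNge hnk /= coef_poly ltnS leq_subr.
have e3 : Q (n - k)%N = (m%:R^-1) ^+ (n - k) * euler_hk a (n - k) (m%:R * x).
  by rewrite hQ.
have hS : Sq n = (n`!)%:R * (C * (Q (n - k)%N / ((n - k)`!)%:R)).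
  by rewrite -e2 -hT e1 mulrC mulfVK // fact_neq0.
rewrite -/(Sq n) hS e3 /C exprVn.
have h1 := fact_neq0 R n; have h2 := fact_neq0 R (n - k).
have h3 : m%:R ^+ (n - k) != 0 :> R by rewrite expf_neq0.
by field; rewrite h2 h3.
Qed.
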